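(* Let $T:X\rightrightarrows X^*$ be a multivalued operator. The following are equivalent: (1) $T$ is pseudomonotone; (2) $S(T,K)\subset S(T^\rho,K)$ for all $K\subset X$; (3) $M(T^\rho,K)\subset M(T,K)$ for all $K\subset X$.
   Context: $X$ is a real Banach space with dual $X^*$ and pairing $\langle x,x^*\rangle=x^*(x)$. A multivalued operator $T:X\rightrightarrows X^*$ is identified with its graph $T\subset X\times X^*$; $T(x)=\{x^*:(x,x^* )\in T\}$. For $K\subset X$: $S(T,K)=\{x\in K: \exists x^*\in T(x),\ \langle y-x,x^*\rangle\ge0\ \forall y\in K\}$ and $M(T,K)=\{x\in K: \langle x-y,y^*\rangle\le0\ \forall (y,y^* )\in T \text{ with } y\in K\}$. For $(x,x^* ),(y,y^* )\in X\times X^*$, write $(x,x^* )\sim_p(y,y^* )$ if either $\min\{\langle x-y,y^*\rangle,\langle y-x,x^*\rangle\}<0$ or $\langle x-y,y^*\rangle=\langle y-x,x^*\rangle=0$. The pseudomonotone polar is $T^\rho=\{(x,x^* ): (x,x^* )\sim_p(y,y^* )\ \forall (y,y^* )\in T\}$. $T$ is pseudomonotone if for all $(x,x^* ),(y,y^* )\in T$, $\langle y-x,x^*\rangle\ge0$ implies $\langle y-x,y^*\rangle\ge0$. *)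

(* Defs.v *)
From Stdlib Require Import Reals.
Open Scope R_scope.
Set Implicit Arguments.

Record Banach := {
  bcar :> Type;
  badd : bcar -> bcar -> bcar;
  bopp : bcar -> bcar;
  bzero : bcar;
  bscal : R -> bcar -> bcar;
  bnorm : bcar -> R;
  badd_assoc : forall x y z, badd x (badd y z) = badd (badd x y) z;
  badd_comm : forall x y, badd x y = badd y x;
  badd_0 : forall x, badd x bzero = x;
  badd_opp : forall x, badd x (bopp x) = bzero;
  bscal_1 : forall x, bscal 1 x = x;
  bscal_assoc : forall a b x, bscal a (bscal b x) = bscal (a * b) x;
  bscal_distr_v : forall a x y, bscal a (badd x y) = badd (bscal a x) (bscal a y);
  bscal_distr_s : forall a b x, bscal (a + b) x = badd (bscal a x) (bscal b x);
  bnorm_0 : forall x, bnorm x = 0 <-> x = bzero;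
  bnorm_scal : forall a x, bnorm (bscal a x) = Rabs a * bnorm x;
  bnorm_tri : forall x y, bnorm (badd x y) <= bnorm x + bnorm y;
  bcomplete : forall u : nat -> bcar,
    (forall eps, eps > 0 -> exists N, forall n m, (n >= N)%nat -> (m >= N)%nat ->
        bnorm (badd (u n) (bopp (u m))) < eps) ->
    exists l, forall eps, eps > 0 -> exists N, forall n, (n >= N)%nat ->
        bnorm (badd (u n) (bopp l)) < eps
}.

Definition bsub {X : Banach} (x y : X) : X := badd X x (bopp X y).

Record dual (X : Banach) := {
  dfun :> X -> R;
  dlin : forall a b (x y : X),
    dfun (badd X (bscal X a x) (bscal X b y)) = a * dfun x + b * dfun y;
  dbdd : exists M, forall x : X, Rabs (dfun x) <= M * bnorm X x
}.

Definition pair {X : Banach} (x : X) (xs : dual X) : R := dfun xs x.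

(* multivalued operator identified with its graph *)
Definition operator (X : Banach) := X -> dual X -> Prop.

Definition S_set (X : Banach) (T : operator X) (K : X -> Prop) : X -> Prop :=
  fun x => K x /\ exists xs, T x xs /\ forall y, K y -> pair (bsub y x) xs >= 0.

Definition M_set (X : Banach) (T : operator X) (K : X -> Prop) : X -> Prop :=
  fun x => K x /\ forall y ys, T y ys -> K y -> pair (bsub x y) ys <= 0.

Definition p_rel (X : Banach) (x : X) (xs : dual X) (y : X) (ys : dual X) : Prop :=
  Rmin (pair (bsub x y) ys) (pair (bsub y x) xs) < 0 \/
  (pair (bsub x y) ys = 0 /\ pair (bsub y x) xs = 0).

Definition pm_polar (X : Banach) (T : operator X) : operator X :=
  fun x xs => forall y ys, T y ys -> p_rel x xs y ys.

Definition pseudomonotone (X : Banach) (T : operator X) : Prop :=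
  forall x xs y ys, T x xs -> T y ys ->
    pair (bsub y x) xs >= 0 -> pair (bsub y x) ys >= 0.

Definition subset (X : Type) (A B : X -> Prop) : Prop := forall x, A x -> B x.

(* Main.v *)
Require Import Defs.
From Stdlib Require Import Reals Lra Classical.

Lemma vsum0 {X : Banach} (x y : X) : badd X (bsub x y) (bsub y x) = bzero X.
Proof.
  unfold bsub. rewrite badd_assoc.
  rewrite <- (badd_assoc X x (bopp X y) y).
  rewrite (badd_comm X (bopp X y) y), badd_opp, badd_0, badd_opp. reflexivity.
Qed.

Lemma dadd {X : Banach} (f : dual X) (u v : X) : f (badd X u v) = f u + f v.
Proof.
  pose proof (dlin f 1 1 u v) as H. rewrite !bscal_1 in H. lra.
Qed.

Lemma dzero {X : Banach} (f : dual X) : f (bzero X) = 0.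
Proof.
  pose proof (dadd f (bzero X) (bzero X)) as H. rewrite badd_0 in H. lra.
Qed.

Lemma pair_anti {X : Banach} (x y : X) (f : dual X) :
  pair (bsub x y) f = - pair (bsub y x) f.
Proof.
  unfold pair. pose proof (dadd f (bsub x y) (bsub y x)) as H.
  rewrite vsum0, dzero in H. lra.
Qed.

Lemma pair_self {X : Banach} (x : X) (f : dual X) : pair (bsub x x) f = 0.
Proof. pose proof (pair_anti x x f). lra. Qed.

Lemma pm_incl {X : Banach} (T : operator X) :
  pseudomonotone T -> forall x xs, T x xs -> pm_polar T x xs.
Proof.
  intros Hp x xs Hx y ys Hy. unfold p_rel.
  destruct (Rlt_le_dec (Rmin (pair (bsub x y) ys) (pair (bsub y x) xs)) 0) as [h|h].
  - left; exact h.
  - right. pose proof (Rmin_l (pair (bsub x y) ys) (pair (bsub y x) xs)).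
    pose proof (Rmin_r (pair (bsub x y) ys) (pair (bsub y x) xs)).
    assert (A : pair (bsub x y) ys >= 0) by lra.
    assert (B : pair (bsub y x) xs >= 0) by lra.
    pose proof (Hp x xs y ys Hx Hy B) as B'.
    pose proof (Hp y ys x xs Hy Hx A) as A'.
    rewrite pair_anti in B'. rewrite (pair_anti x y xs) in A'. lra.
Qed.

Lemma p_rel_contra {X : Banach} {x : X} {xs y ys} :
  p_rel x xs y ys -> pair (bsub x y) ys >= 0 -> pair (bsub y x) xs >= 0 ->
  pair (bsub x y) ys = 0 /\ pair (bsub y x) xs = 0.
Proof.
  intros [h|h] A B; [|exact h].
  exfalso. unfold Rmin in h. destruct (Rle_dec _ _); lra.
Qed.

Theorem mainTheorem18 (X : Banach) (T : operator X) :
  (pseudomonotone T <-> forall K : X -> Prop, subset (S_set T K) (S_set (pm_polar T) K)) /\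
  (pseudomonotone T <-> forall K : X -> Prop, subset (M_set (pm_polar T) K) (M_set T K)).
Proof.
  split; split.
  - intros Hp K x [Kx [xs [Hx Hs]]]. split; [exact Kx|].
    exists xs. split; [apply pm_incl; assumption | exact Hs].
  - intros H x xs y ys Hx Hy B.
    destruct (Rlt_le_dec (pair (bsub y x) ys) 0) as [c|c]; [|lra].
    exfalso.
    assert (HS : S_set T (fun z => z = x \/ z = y) x).
    { split; [left; reflexivity|]. exists xs. split; [exact Hx|].
      intros z [->| ->]; [rewrite pair_self; lra | exact B]. }
    destruct (H _ x HS) as [_ [zs [Hz Hzs]]].
    pose proof (Hzs y (or_intror eq_refl)) as B2.
    pose proof (Hz y ys Hy) as Hr.
    rewrite pair_anti in c.
    destruct (p_rel_contra Hr ltac:(lra) B2). lra.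
  - intros Hp K x [Kx Hm]. split; [exact Kx|].
    intros y ys Hy Ky. apply Hm; [apply pm_incl|]; assumption.
  - intros H x xs y ys Hx Hy B.
    destruct (Rlt_le_dec (pair (bsub y x) ys) 0) as [c|c]; [|lra].
    exfalso.
    assert (HM : M_set (pm_polar T) (fun z => z = x \/ z = y) x).
    { split; [left; reflexivity|]. intros z zs Hz [-> | ->].
      - rewrite pair_self; lra.
      - destruct (Rle_lt_dec (pair (bsub x y) zs) 0) as [d|d]; [exact d|].
        pose proof (Hz x xs Hx) as Hr.
        destruct (p_rel_contra Hr B ltac:(lra)). lra. }
    destruct (H _ x HM) as [_ Hm].
    pose proof (Hm y ys Hy (or_intror eq_refl)) as E.
    rewrite pair_anti in c. lra.
Qed.
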